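(* Let $P=\Bbbk[x_1,x_2,x_3]$ with Poisson bracket $\{x_1,x_2\}=0$, $\{x_2,x_3\}=3x_1^2$, $\{x_3,x_1\}=0$. Then $\mathrm{PAut}_{\mathrm{gr}}(P)$ consists exactly of the maps whose matrix is \[ \begin{bmatrix}\epsilon & 0 & 0\\ a & b & c\\ d & e & f\end{bmatrix},\quad a,b,c,d,e,f\in\Bbbk,\ bf\neq ce,\ \epsilon^2=bf-ce, \] and the set of Poisson reflections of $P$ is \[ \mathrm{PR}(P)=\left\{\begin{bmatrix}-1&0&0\\ a&1&0\\ d&0&1\end{bmatrix}: a,d\in\Bbbk\right\}. \]
   Context: $\Bbbk$ is algebraically closed of characteristic $0$; $P$ has the standard grading. A graded Poisson automorphism $\phi$ (degree-preserving bijective algebra and Lie homomorphism) is identified with the matrix $[a_{ij}]$ where $\phi(x_i)=\sum_{k=1}^3 a_{ik}x_k$. A Poisson reflection is a finite-order graded Poisson automorphism $\phi$ such that $\phi|_{P_1}$ has eigenvalues $1,1,\xi$ for some primitive $m$-th root of unity $\xi\neq1$. *)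

(* Defs.v *)
From HB Require Import structures.
From mathcomp Require Import all_boot all_algebra.
From mathcomp Require Import mpoly.

Set Implicit Arguments.
Unset Strict Implicit.
Unset Printing Implicit Defensive.

Import GRing.Theory.
Local Open Scope ring_scope.

(* The polynomial algebra P = k[x_1,x_2,x_3] is {mpoly K[3]};
   the paper's variable x_(i+1) is 'X_i (i : 'I_3). *)

Section PoissonDefs.
Variable K : fieldType.

Local Notation P := {mpoly K[3]}.

Definition homog_of (d : nat) (p : P) : bool := p \is ishomog1 d mdeg.

Definition br_gen (i j : 'I_3) : P :=
  if ((i : nat) == 1%N) && ((j : nat) == 2%N) then 3%:R * 'X_0 ^+ 2
  else if ((i : nat) == 2%N) && ((j : nat) == 1%N) then - (3%:R * 'X_0 ^+ 2)
  else 0.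

(* The unique biderivation extending br_gen:
   {f,g} = sum_{i,j} (d f / d x_i) (d g / d x_j) {x_i,x_j}. *)
Definition pbr (f g : P) : P :=
  \sum_(i < 3) \sum_(j < 3) mderiv i f * mderiv j g * br_gen i j.

Definition is_gr_PAut (phi : P -> P) : Prop :=
  bijective phi /\
  (forall (c : K) (p q : P), phi (c *: p + q) = c *: phi p + phi q) /\
  phi 1 = 1 /\
  (forall p q : P, phi (p * q) = phi p * phi q) /\
  (forall (d : nat) (p : P), homog_of d p -> homog_of d (phi p)) /\
  (forall p q : P, phi (pbr p q) = pbr (phi p) (phi q)).

Definition mat_P1 (phi : P -> P) : 'M[K]_3 :=
  \matrix_(i < 3, k < 3) (phi 'X_i)@_(U_(k))%MM.

Definition lin_subst (A : 'M[K]_3) (p : P) : P :=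
  comp_mpoly [tuple \sum_(k < 3) A i k *: ('X_k : P) | i < 3] p.

Definition finite_order (phi : P -> P) : Prop :=
  exists n : nat, (0 < n)%N /\ forall p : P, iter n phi p = p.

Definition is_PReflection (phi : P -> P) : Prop :=
  is_gr_PAut phi /\ finite_order phi /\
  exists (m : nat) (xi : K), m.-primitive_root xi /\ xi != 1 /\
    char_poly (mat_P1 phi) = ('X - 1) ^+ 2 * ('X - xi%:P).

End PoissonDefs.

Definition mx3 (K : fieldType) (a11 a12 a13 a21 a22 a23 a31 a32 a33 : K)
  : 'M[K]_3 :=
  \matrix_(i < 3, j < 3)
    nth 0 (nth [::] [:: [:: a11; a12; a13]; [:: a21; a22; a23];
                        [:: a31; a32; a33]] i) j.

(* Main.v *)
Require Import Defs.
From HB Require Import structures.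
From mathcomp Require Import all_boot all_algebra.
From mathcomp Require Import mpoly.
From mathcomp Require Import ring.
Import GRing.Theory.
Local Open Scope ring_scope.


Lemma det3 (R : comNzRingType) (A : 'M[R]_3) : \det A =
  A 0 0 * (A 1 1 * A 2 2 - A 1 2 * A 2 1)
  - A 0 1 * (A 1 0 * A 2 2 - A 1 2 * A 2 0)
  + A 0 2 * (A 1 0 * A 2 1 - A 1 1 * A 2 0).
Proof.
have -> : A = \matrix_(i, j) A (inord i) (inord j).
  by apply/matrixP => i j; rewrite mxE !inord_val.
rewrite (expand_det_row _ 0) !big_ord_recl big_ord0 /cofactor.
rewrite !(expand_det_row _ 0) !big_ord_recl !big_ord0 /cofactor !det_mx11 !mxE /=.
rewrite !expr0 !expr1. ring.
Qed.
Lemma mx3M (K : fieldType) (a11 a12 a13 a21 a22 a23 a31 a32 a33 b11 b12 b13 b21 b22 b23 b31 b32 b33 : K) :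
  mx3 a11 a12 a13 a21 a22 a23 a31 a32 a33 *m mx3 b11 b12 b13 b21 b22 b23 b31 b32 b33 =
  mx3 (a11*b11 + a12*b21 + a13*b31) (a11*b12 + a12*b22 + a13*b32) (a11*b13 + a12*b23 + a13*b33)
      (a21*b11 + a22*b21 + a23*b31) (a21*b12 + a22*b22 + a23*b32) (a21*b13 + a22*b23 + a23*b33)
      (a31*b11 + a32*b21 + a33*b31) (a31*b12 + a32*b22 + a33*b32) (a31*b13 + a32*b23 + a33*b33).
Proof.
apply/matrixP => i j; rewrite !mxE !big_ord_recl big_ord0 !mxE /=.
by case: i => [[|[|[|//]]] ?]; case: j => [[|[|[|//]]] ?] /=; rewrite addr0 ?addrA.
Qed.

Lemma mx3_1 (K : fieldType) : (1%:M : 'M[K]_3) = mx3 1 0 0 0 1 0 0 0 1.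
Proof.
apply/matrixP => i j; rewrite !mxE /=.
by case: i => [[|[|[|//]]] ?]; case: j => [[|[|[|//]]] ?].
Qed.

Lemma mx3_eta (K : fieldType) (A : 'M[K]_3) : A = mx3 (A 0 0) (A 0 1) (A 0 2) (A 1 0) (A 1 1) (A 1 2) (A 2 0) (A 2 1) (A 2 2).
Proof.
apply/matrixP => i j; rewrite !mxE /=.
case: i => [[|[|[|//]]] ?]; case: j => [[|[|[|//]]] ?] /=; congr (A _ _); exact: val_inj.
Qed.
Lemma lift01 : lift ord0 ord0 = 1 :> 'I_3. Proof. exact: val_inj. Qed.
Lemma lift02 : lift ord0 (lift ord0 ord0) = 2 :> 'I_3. Proof. exact: val_inj. Qed.

Section S.
Context {K : fieldType}.
Local Notation P := {mpoly K[3]}.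
Implicit Types (A B : 'M[K]_3) (p q r : P).

Definition L (u : 'I_3 -> K) : P := \sum_(k < 3) u k *: 'X_k.
Definition T : P := 3%:R * 'X_0 ^+ 2.

Lemma S_ind (S : P -> Prop) : S 1 -> (forall i, S 'X_i) ->
  (forall p q, S p -> S q -> S (p + q)) -> (forall c p, S p -> S (c *: p)) ->
  (forall p q, S p -> S q -> S (p * q)) -> forall p, S p.
Proof.
move=> S1 SX SD SZ SM; elim/mpolyind => [|c m p _ _ Sp].
  by rewrite -(scale0r 1); apply: SZ.
apply: SD => //; apply: SZ; rewrite mpolyXE_id.
elim/big_ind: _ => // i _; elim: (m i) => [|k IH]; first by rewrite expr0.
by rewrite exprS; apply: SM.
Qed.

Lemma lin_substX A i : lin_subst A 'X_i = L (fun k => A i k).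
Proof. by rewrite /lin_subst comp_mpolyXU -tnth_nth tnth_mktuple. Qed.

Lemma lin_substD A : {morph lin_subst A : p q / p + q}.
Proof. by move=> p q; rewrite /lin_subst comp_mpolyD. Qed.
Lemma lin_substZ A c p : lin_subst A (c *: p) = c *: lin_subst A p.
Proof. by rewrite /lin_subst comp_mpolyZ. Qed.
Lemma lin_substM A : {morph lin_subst A : p q / p * q}.
Proof. by move=> p q; rewrite /lin_subst rmorphM. Qed.
Lemma lin_subst1 A : lin_subst A 1 = 1.
Proof. by rewrite /lin_subst comp_mpoly1. Qed.
Lemma lin_subst0 A : lin_subst A 0 = 0.
Proof. by rewrite /lin_subst comp_mpoly0. Qed.

Lemma eq_L u v : u =1 v -> L u = L v.
Proof. by move=> e; apply: eq_bigr => k _; rewrite e. Qed.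

Lemma lin_substL A u : lin_subst A (L u) = L (fun l => \sum_k u k * A k l).
Proof.
rewrite /L (big_morph _ (lin_substD A) (lin_subst0 A)).
under eq_bigr do rewrite lin_substZ lin_substX /L scaler_sumr.
rewrite exchange_big /=; apply: eq_bigr => l _; rewrite scaler_suml.
by apply: eq_bigr => k _; rewrite scalerA.
Qed.

Lemma L_delta j : L (fun k => (j == k)%:R) = 'X_j.
Proof.
rewrite /L (bigD1 j) //= eqxx scale1r big1 ?addr0 // => k /negbTE.
by rewrite eq_sym => ->; rewrite scale0r.
Qed.

Lemma lin_subst_comp A B p : lin_subst A (lin_subst B p) = lin_subst (B *m A) p.
Proof.
elim/S_ind: p => [|i|p q Hp Hq|c p Hp|p q Hp Hq].
- by rewrite !lin_subst1.
- rewrite !lin_substX lin_substL; apply: eq_L => l.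
  by rewrite mxE.
- by rewrite !lin_substD Hp Hq.
- by rewrite !lin_substZ Hp.
- by rewrite !lin_substM Hp Hq.
Qed.

Lemma lin_subst_id p : lin_subst 1%:M p = p.
Proof.
elim/S_ind: p => [|i|p q Hp Hq|c p Hp|p q Hp Hq].
- by rewrite !lin_subst1.
- rewrite lin_substX -[RHS]L_delta; apply: eq_L => l.
  by rewrite mxE.
- by rewrite !lin_substD Hp Hq.
- by rewrite !lin_substZ Hp.
- by rewrite !lin_substM Hp Hq.
Qed.

Lemma mderivXU i j : mderiv i ('X_j : P) = (j == i)%:R%:MP.
Proof.
rewrite mderivX mnm1E; case: eqP => [->|_]; last by rewrite scale0r.
have -> : (U_(i) - U_(i))%MM = 0%MM by apply/mnmP => k; rewrite mnmBE mnm0E subnn.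
by rewrite mpolyX0 scale1r.
Qed.

Lemma mderivL i u : mderiv i (L u) = (u i)%:MP.
Proof.
rewrite /L raddf_sum /=.
under eq_bigr do rewrite mderivZ mderivXU.
rewrite (bigD1 i) //= eqxx big1 ?addr0 -?mul_mpolyC ?mulr1 // => k /negbTE ->.
by rewrite scaler0.
Qed.

Lemma pbrL u v : pbr (L u) (L v) = (u 1 * v 2 - u 2 * v 1) *: T.
Proof.
rewrite /pbr !big_ord_recl !big_ord0 !mderivL /br_gen /= /T.
rewrite -mul_mpolyC !rmorphB !rmorphM /= ?lift01 ?lift02. ring.
Qed.

Lemma mderiv1 i : mderiv i (1 : P) = 0.
Proof. by rewrite -mpolyC1 mderivC. Qed.

Lemma pbrDl p q r : pbr (p + q) r = pbr p r + pbr q r.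
Proof.
rewrite /pbr -big_split; apply: eq_bigr => i _; rewrite -big_split.
by apply: eq_bigr => j _ /=; rewrite mderivD !mulrDl.
Qed.
Lemma pbrDr p q r : pbr r (p + q) = pbr r p + pbr r q.
Proof.
rewrite /pbr -big_split; apply: eq_bigr => i _; rewrite -big_split.
by apply: eq_bigr => j _ /=; rewrite mderivD mulrDr !mulrDl.
Qed.
Lemma pbrZl c p r : pbr (c *: p) r = c *: pbr p r.
Proof.
rewrite /pbr scaler_sumr; apply: eq_bigr => i _; rewrite scaler_sumr.
by apply: eq_bigr => j _; rewrite mderivZ !scalerAl.
Qed.
Lemma pbrZr c p r : pbr r (c *: p) = c *: pbr r p.
Proof.
rewrite /pbr scaler_sumr; apply: eq_bigr => i _; rewrite scaler_sumr.
by apply: eq_bigr => j _; rewrite mderivZ scalerAl scalerAr.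
Qed.
Lemma pbrMl p q r : pbr (p * q) r = p * pbr q r + q * pbr p r.
Proof.
rewrite /pbr !mulr_sumr -big_split; apply: eq_bigr => i _.
rewrite !mulr_sumr -big_split; apply: eq_bigr => j _ /=.
rewrite mderivM; ring.
Qed.
Lemma pbrMr p q r : pbr r (p * q) = p * pbr r q + q * pbr r p.
Proof.
rewrite /pbr !mulr_sumr -big_split; apply: eq_bigr => i _.
rewrite !mulr_sumr -big_split; apply: eq_bigr => j _ /=.
rewrite mderivM; ring.
Qed.
Lemma pbr1l r : pbr 1 r = 0.
Proof.
rewrite /pbr big1 // => i _; rewrite big1 // => j _.
by rewrite mderiv1 !mul0r.
Qed.
Lemma pbr1r r : pbr r 1 = 0.
Proof.
rewrite /pbr big1 // => i _; rewrite big1 // => j _.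
by rewrite mderiv1 mulr0 mul0r.
Qed.

Lemma pbrXX i j : pbr ('X_i : P) 'X_j = br_gen K i j.
Proof.
rewrite -!L_delta pbrL /br_gen /T.
case: i => [[|[|[|//]]] ?]; case: j => [[|[|[|//]]] ?] /=;
  by rewrite ?mul0r ?mul1r ?mulr0 ?mulr1 ?subr0 ?sub0r ?scale1r ?scaleN1r ?scale0r.
Qed.

Lemma lin_subst_pbr A :
  (forall i j, lin_subst A (br_gen K i j) = pbr (lin_subst A 'X_i) (lin_subst A 'X_j)) ->
  forall p q, lin_subst A (pbr p q) = pbr (lin_subst A p) (lin_subst A q).
Proof.
move=> hg.
have h1 : forall i q, lin_subst A (pbr 'X_i q) = pbr (lin_subst A 'X_i) (lin_subst A q).
  move=> i; elim/S_ind => [|j|p q Hp Hq|c p Hp|p q Hp Hq].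
  - by rewrite !pbr1r lin_subst1 pbr1r lin_subst0.
  - by rewrite pbrXX hg.
  - by rewrite pbrDr lin_substD Hp Hq -pbrDr lin_substD.
  - by rewrite pbrZr lin_substZ Hp -pbrZr lin_substZ.
  - by rewrite pbrMr lin_substD !lin_substM Hp Hq -pbrMr.
move=> p q; elim/S_ind: p => [|j|p p' Hp Hq|c p Hp|p p' Hp Hq].
  - by rewrite !pbr1l lin_subst1 pbr1l lin_subst0.
  - by rewrite h1.
  - by rewrite pbrDl lin_substD Hp Hq -pbrDl lin_substD.
  - by rewrite pbrZl lin_substZ Hp -pbrZl lin_substZ.
  - by rewrite pbrMl lin_substD !lin_substM Hp Hq -pbrMl.
Qed.

Lemma L_homog u : homog_of 1 (L u).
Proof.
rewrite /homog_of /L; apply: rpred_sum => k _; apply: rpredZ.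
by rewrite dhomogX; apply/eqP; apply: mdeg1.
Qed.

Lemma lin_subst_homog A d p : homog_of d p -> homog_of d (lin_subst A p).
Proof.
move=> hp; rewrite [p]mpolyE (big_morph _ (lin_substD A) (lin_subst0 A)).
rewrite /homog_of big_seq; apply: rpred_sum => m mm; rewrite lin_substZ; apply: rpredZ.
rewrite /lin_subst comp_mpolyX -(dhomog_mf hp mm) mfE !big_ord_recl !big_ord0 !mulr1 addn0.
have e1 : forall i : 'I_3, (mdeg : measure 3) U_(i)%MM = 1%N by move=> i; apply: mdeg1.
rewrite !e1 !muln1.
apply: dhomogM; [|apply: dhomogM]; rewrite -[X in X.-homog]mul1n;
  apply: dhomogMn; rewrite tnth_mktuple; exact: L_homog.
Qed.

Lemma mat_P1_lin A : mat_P1 (lin_subst A) = A.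
Proof.
apply/matrixP => i j; rewrite mxE lin_substX /L raddf_sum /=.
under eq_bigr do rewrite mcoeffZ mcoeffXU.
rewrite (bigD1 j) //= eqxx mulr1 big1 ?addr0 // => k /negbTE ->.
by rewrite mulr0.
Qed.

Lemma homog1_L p : homog_of 1 p -> p = L (fun k => p@_U_(k)).
Proof.
move=> hp; apply/mpolyP => m; rewrite /L raddf_sum /=.
under eq_bigr do rewrite mcoeffZ mcoeffX.
case: (boolP (mdeg m == 1%N)) => [/mdeg1P [i /eqP ->]|hm].
  rewrite (bigD1 i) //= eqxx mulr1 big1 ?addr0 // => k /negbTE hk.
  by rewrite eq_mnm1 hk mulr0.
rewrite (dhomog_nemf_coeff hp hm) big1 // => k _.
case: eqP => [e|]; last by rewrite mulr0.
by move: hm; rewrite -e mdeg1.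
Qed.

End S.


Lemma char_poly_mx3 (K : fieldType) (eps a b c d e f : K) :
  char_poly (mx3 eps 0 0 a b c d e f) =
  ('X - eps%:P) * ('X ^+ 2 - (b + f)%:P * 'X + (b * f - c * e)%:P).
Proof.
rewrite /char_poly det3 /char_poly_mx !mxE /=.
rewrite !mulr1n !mulr0n ?rmorph0 !rmorphD ?rmorphB !rmorphM /=.
ring.
Qed.

Section Main.
Variable K : fieldType.
Hypothesis hK : [pchar K] =i pred0.
Local Notation P := {mpoly K[3]}.
Implicit Types (A B : 'M[K]_3) (p q r : P).

Lemma natK_neq0 n : (0 < n)%N -> n%:R != 0 :> K.
Proof. by move=> hn; rewrite (proj1 (pcharf0P _) hK) -lt0n. Qed.

Lemma T_neq0 : T (K:=K) != 0.
Proof.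
apply/eqP => h; have := congr1 (mcoeff (U_(ord0 : 'I_3) *+ 2)%MM) h.
rewrite /T mpolyXn -(rmorph_nat (@mpolyC 3 K)) mcoeffCM mcoeffX eqxx mcoeff0 mulr1.
by move/eqP; rewrite (negbTE (natK_neq0 3 isT)).
Qed.

Lemma X_neq0 i : ('X_i : P) != 0.
Proof.
apply/eqP => h; have := congr1 (mcoeff U_(i)%MM) h.
by rewrite mcoeffX eqxx mcoeff0 => /eqP; rewrite oner_eq0.
Qed.

Lemma scaleT_inj x y : x *: T (K:=K) = y *: T (K:=K) -> x = y.
Proof.
move=> h; apply/eqP; rewrite -subr_eq0.
have : (x - y) *: T (K:=K) == 0 by rewrite scalerBl h subrr.
by rewrite scaler_eq0 (negbTE T_neq0) orbF.
Qed.

Lemma lin_substT A : A 0 1 = 0 -> A 0 2 = 0 -> lin_subst A (T (K:=K)) = (A 0 0)^+2 *: T (K:=K).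
Proof.
move=> h1 h2; rewrite /T lin_substM.
have -> : lin_subst A 3%:R = 3%:R by rewrite /lin_subst rmorph_nat.
have -> : lin_subst A ('X_0 ^+ 2) = (lin_subst A 'X_0) ^+ 2 by rewrite /lin_subst rmorphXn.
rewrite lin_substX.
rewrite /L !big_ord_recl big_ord0 lift01 lift02 h1 h2 !scale0r !addr0.
by rewrite exprZn -scalerAr.
Qed.


Lemma pbrX0 q : pbr ('X_0 : P) q = 0.
Proof.
rewrite /pbr big1 // => i _; rewrite big1 // => j _; rewrite mderivXU.
by case: i => [[|[|[|//]]] ?]; rewrite /br_gen /= ?mulr0 ?mul0r.
Qed.

Lemma gr_fwd (phi : P -> P) : is_gr_PAut phi ->
  exists eps a b c d e f : K,
       b * f != c * e /\ eps ^+ 2 = b * f - c * e /\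
       phi =1 lin_subst (mx3 eps 0 0 a b c d e f).
Proof.
case=> [[g phig gphi] [hlin [h1 [hM [hhom hbr]]]]].
have phi0 : phi 0 = 0.
  have h := hlin 1 0 0; rewrite scaler0 scale1r addr0 in h.
  by apply: (addrI (phi 0)); rewrite addr0 -h.
have phiD p q : phi (p + q) = phi p + phi q by rewrite -{1}[p]scale1r hlin scale1r.
have phiZ c p : phi (c *: p) = c *: phi p by rewrite -[c *: p]addr0 hlin phi0 addr0.
set M := mat_P1 phi.
have hX i : phi 'X_i = L (fun k => M i k).
  have hh : homog_of 1 (phi 'X_i).
    by apply: hhom; rewrite /homog_of dhomogX; apply/eqP; apply: mdeg1.
  rewrite [LHS](homog1_L _ hh).
  by apply: eq_L => k; rewrite mxE.
have hphi : phi =1 lin_subst M.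
  move=> p0; elim/(@S_ind K): p0 => [|i|p q Hp Hq|c p Hp|p q Hp Hq].
  - by rewrite h1 lin_subst1.
  - by rewrite hX lin_substX.
  - by rewrite phiD lin_substD Hp Hq.
  - by rewrite phiZ lin_substZ Hp.
  - by rewrite hM lin_substM Hp Hq.
have key q : pbr (phi 'X_0) (phi q) = 0 by rewrite -hbr pbrX0.
have hM01 : M 0 1 = 0.
  have := key (g 'X_2); rewrite gphi hX -L_delta pbrL /= mulr1 mulr0 subr0.
  by move/eqP; rewrite scaler_eq0 (negbTE T_neq0) orbF => /eqP.
have hM02 : M 0 2 = 0.
  have := key (g 'X_1); rewrite gphi hX -L_delta pbrL /= mulr1 mulr0 sub0r.
  by move/eqP; rewrite scaler_eq0 (negbTE T_neq0) orbF oppr_eq0 => /eqP.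
have hM1 : M = mx3 (M 0 0) 0 0 (M 1 0) (M 1 1) (M 1 2) (M 2 0) (M 2 1) (M 2 2).
  by rewrite {1}[M]mx3_eta hM01 hM02.
have heps : M 0 0 ^+ 2 = M 1 1 * M 2 2 - M 1 2 * M 2 1.
  have := hbr 'X_1 'X_2; rewrite pbrXX /br_gen /= -/(T (K:=K)) !hphi lin_substT //.
  by rewrite !lin_substX pbrL => /scaleT_inj.
exists (M 0 0), (M 1 0), (M 1 1), (M 1 2), (M 2 0), (M 2 1), (M 2 2).
split; last by split => // p; rewrite hphi -hM1.
apply/negP => /eqP hbc; move: heps; rewrite hbc subrr => /eqP; rewrite expf_eq0 /= => /eqP h00.
have : phi 'X_0 = phi 0.
  rewrite hX phi0 /L !big_ord_recl big_ord0 lift01 lift02 hM01 hM02.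
  by rewrite [M 0 ord0]h00 !scale0r !addr0.
move/(congr1 g); rewrite !phig => /eqP; by rewrite (negbTE (X_neq0 0)).
Qed.


Lemma lin_substN A p : lin_subst A (- p) = - lin_subst A p.
Proof. by rewrite /lin_subst raddfN. Qed.

Lemma gr_bwd (phi : P -> P) (eps a b c d e f : K) :
  b * f != c * e -> eps ^+ 2 = b * f - c * e ->
  phi =1 lin_subst (mx3 eps 0 0 a b c d e f) -> is_gr_PAut phi.
Proof.
move=> hbc heps hphi.
set M := mx3 eps 0 0 a b c d e f.
set D := b * f - c * e.
have hD : D != 0 by rewrite subr_eq0.
have heps0 : eps != 0.
  by apply/eqP => h0; move: hD; rewrite /D -heps h0 expr0n eqxx.
set N := mx3 (1 / eps) 0 0 (- (f * a - c * d) / (D * eps)) (f / D) (- c / D)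
               (- (b * d - e * a) / (D * eps)) (- e / D) (b / D).
have hMN : M *m N = 1%:M.
  rewrite /M /N mx3M mx3_1 /D; congr mx3; field; by rewrite ?heps0 ?subr_eq0 ?hbc.
have hNM : N *m M = 1%:M by apply: mulmx1C.
split.
  exists (lin_subst N) => p; first by rewrite hphi lin_subst_comp hMN lin_subst_id.
  by rewrite hphi lin_subst_comp hNM lin_subst_id.
split; first by move=> c0 p q; rewrite !hphi lin_substD lin_substZ.
split; first by rewrite hphi lin_subst1.
split; first by move=> p q; rewrite !hphi lin_substM.
split; first by move=> d0 p hp; rewrite hphi; apply: lin_subst_homog.
move=> p q; rewrite !hphi; apply: lin_subst_pbr => i j.
have hT : lin_subst M (T (K:=K)) = eps ^+ 2 *: T (K:=K).
  by rewrite lin_substT /M /mx3 ?mxE.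
have cl : forall x y : K, x = y -> x *: T (K:=K) = y *: T (K:=K) by move=> x y ->.
rewrite !lin_substX pbrL /br_gen.
case: i => [[|[|[|//]]] ?]; case: j => [[|[|[|//]]] ?] /=;
  rewrite ?lin_subst0 ?lin_substN -/(T (K:=K)) ?lin_substN ?hT -?scaleNr -?(scale0r (T (K:=K)));
  apply: cl; rewrite /M /mx3 !mxE /= ?heps; ring.
Qed.


Lemma mx3_1r : (1 : 'M[K]_3) = mx3 1 0 0 0 1 0 0 0 1.
Proof. exact: mx3_1. Qed.

Lemma mx3_pow (eps a b c d e f : K) : b + f = 2 -> c * e + (b - 1) ^+ 2 = 0 ->
  forall k, exists z x y, (mx3 eps 0 0 a b c d e f) ^+ k =
    mx3 z 0 0 x (1 + k%:R * (b - 1)) (k%:R * c) y (k%:R * e) (1 + k%:R * (f - 1)).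
Proof.
move=> hbf hce; have hf : f = 2 - b by rewrite -hbf addrC addKr.
elim=> [|k [z [x [y IH]]]].
  by exists 1, 0, 0; rewrite expr0 mx3_1r !mul0r !addr0.
exists (z * eps + 0 * a + 0 * d),
  (x * eps + (1 + k%:R * (b - 1)) * a + k%:R * c * d),
  (y * eps + k%:R * e * a + (1 + k%:R * (f - 1)) * d).
rewrite exprSr IH -mulmxE mx3M; rewrite hf; congr mx3; rewrite ?mulrS;
  first [ring | (apply/eqP; rewrite -subr_eq0; apply/eqP;
    transitivity (k%:R * (c * e + (b - 1) ^+ 2)); [ring | by rewrite hce mulr0])].
Qed.

Lemma iter_lin (phi : P -> P) A : phi =1 lin_subst A ->
  forall k p, iter k phi p = lin_subst (A ^+ k) p.
Proof.
move=> hphi; elim=> [|k IH] p /=; first by rewrite expr0 lin_subst_id.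
by rewrite IH hphi lin_subst_comp exprSr mulmxE.
Qed.

Lemma mat_P1_ext (phi : P -> P) A : phi =1 lin_subst A -> mat_P1 phi = A.
Proof.
move=> hphi; rewrite -[RHS](mat_P1_lin A).
by apply/matrixP => i j; rewrite !mxE hphi.
Qed.


Lemma two_neq0 : 2 != 0 :> K.
Proof. exact: (natK_neq0 2 isT). Qed.

Lemma N1_neq1 : (-1 : K) != 1.
Proof.
apply/eqP => h; move: two_neq0; rewrite -[2]/(1 + 1) -{1}h.
by rewrite addNr eqxx.
Qed.

Lemma refl_bwd (phi : P -> P) (a d : K) :
  phi =1 lin_subst (mx3 (-1) 0 0 a 1 0 d 0 1) -> is_PReflection phi.
Proof.
move=> hphi; set M := mx3 _ _ _ _ _ _ _ _ _ in hphi.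
split.
  apply: gr_bwd hphi; first by rewrite mul1r mul0r oner_neq0.
  by rewrite sqrrN expr1n mul1r mul0r subr0.
split.
  exists 2%N; split => // p /=.
  rewrite !hphi lin_subst_comp.
  have -> : M *m M = 1%:M by rewrite /M mx3M mx3_1; congr mx3; ring.
  exact: lin_subst_id.
exists 2%N, (-1); split.
  apply/andP; split => //; apply/forallP => -[[|[|//]] ?]; rewrite unity_rootE /=.
    by rewrite expr1 (negbTE N1_neq1).
  by rewrite sqrrN expr1n !eqxx.
split; first exact: N1_neq1.
rewrite (mat_P1_ext _ _ hphi) /M char_poly_mx3.
rewrite !rmorphD ?rmorphB ?rmorphM ?rmorphN /= ?rmorph1 -?polyC1. ring.
Qed.


Lemma lin_eq (x y z : K) : x - y = z -> z = 0 -> x = y.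
Proof. by move=> h hz; apply/eqP; rewrite -subr_eq0 h hz. Qed.

Ltac lin1 h k := match type of h with ?a = ?b =>
  apply: (lin_eq _ _ (k * (a - b))); [ring | by rewrite h subrr mulr0] end.
Ltac lin2 h k h' k' := match type of h with ?a = ?b => match type of h' with ?a' = ?b' =>
  apply: (lin_eq _ _ (k * (a - b) + k' * (a' - b'))); [ring | by rewrite h h' !subrr !mulr0 addr0] end end.

Lemma refl_fwd (phi : P -> P) : is_PReflection phi ->
  exists a d : K, phi =1 lin_subst (mx3 (-1) 0 0 a 1 0 d 0 1).
Proof.
move=> [hgr [[n [hn hit]] [m [xi [hprim [hxi hchar]]]]]].
have [eps [a [b [c [d [e [f [hbc [heps hphi]]]]]]]]] := gr_fwd _ hgr.
rewrite (mat_P1_ext _ _ hphi) char_poly_mx3 in hchar.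
have hX1 (z : K) : 'X - z%:P != 0 by rewrite polyXsubC_eq0.
have := congr1 (horner^~ eps) hchar; rewrite !(hornerD, hornerN, hornerM, hornerX, hornerC, hornerXsubC, hornerXn, hornerM) subrr mul0r.
move=> /esym/eqP; rewrite !mulf_eq0 !subr_eq0 orbb => /orP [/eqP e1|/eqP exi].
  exfalso; move: hchar; rewrite e1 -polyC1 expr2 -mulrA => /(mulfI (hX1 1)) h.
  have := congr1 (horner^~ 0) h; rewrite !(hornerD, hornerN, hornerM, hornerX, hornerC, hornerXsubC, hornerXn, hornerM) => h0.
  have hD : b * f - c * e = xi.
    apply: (lin_eq _ _ ((0 * 0 - (b + f) * 0 + (b * f - c * e)) - (0 - 1) * (0 - xi))); first ring.
    by rewrite h0 subrr.
  by move: hxi; rewrite -hD -heps e1 expr1n eqxx.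
move: hchar; rewrite -exi [RHS]mulrC => /(mulfI (hX1 eps)) h.
have h0 := congr1 (horner^~ 0) h.
rewrite !(hornerD, hornerN, hornerM, hornerX, hornerC, hornerXsubC, hornerXn, hornerM) in h0.
have h1 := congr1 (horner^~ 1) h.
rewrite !(hornerD, hornerN, hornerM, hornerX, hornerC, hornerXsubC, hornerXn, hornerM) in h1.
have hD1 : b * f - c * e = 1 by lin1 h0 (1 : K).
have hbf : b + f = 2 by lin2 h1 (-1 : K) h0 (1 : K).
have he1 : eps = -1.
  have : (eps - 1) * (eps + 1) = 0.
    by apply: (lin_eq _ _ (eps ^+ 2 - 1)); [ring | rewrite heps hD1 subrr].
  move/eqP; rewrite mulf_eq0 subr_eq0 {1}exi (negbTE hxi) /= addr_eq0 => /eqP //.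
have hce : c * e + (b - 1) ^+ 2 = 0.
  by apply: (lin_eq _ _ ((b + f - 2) * b - (b * f - c * e - 1))); [ring | rewrite hbf hD1 !subrr mul0r subrr].
have [z [x [y hpow]]] := mx3_pow eps a b c d e f hbf hce n.
have hid : (mx3 eps 0 0 a b c d e f) ^+ n = 1.
  apply/matrixP => i j.
  rewrite -[LHS](congr1 (fun A => A i j) (mat_P1_lin (mx3 eps 0 0 a b c d e f ^+ n))).
  by rewrite !mxE -(iter_lin _ _ hphi) hit mcoeffXU.
move: hid; rewrite hpow mx3_1r => hid.
have hn0 := natK_neq0 n hn.
have c0 : c = 0.
  have := congr1 (fun A : 'M[K]_3 => A 1 2) hid; rewrite /mx3 !mxE /=.
  by move/eqP; rewrite mulf_eq0 (negbTE hn0) /= => /eqP.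
have e0 : e = 0.
  have := congr1 (fun A : 'M[K]_3 => A 2 1) hid; rewrite /mx3 !mxE /=.
  by move/eqP; rewrite mulf_eq0 (negbTE hn0) /= => /eqP.
have b1 : b = 1.
  have := congr1 (fun A : 'M[K]_3 => A 1 1) hid; rewrite /mx3 !mxE /=.
  move=> hh; have hb : n%:R * (b - 1) = 0 by lin1 hh (1 : K).
  by move/eqP: hb; rewrite mulf_eq0 (negbTE hn0) subr_eq0 /= => /eqP.
have f1 : f = 1.
  apply: (lin_eq _ _ ((b + f - 2) - (b - 1))); first ring.
  by rewrite hbf b1 !subrr.
by exists a, d => p; rewrite hphi he1 b1 c0 e0 f1.
Qed.

End Main.

Theorem lemma3p1p1 (K : closedFieldType) (hK : [pchar K] =i pred0) :
  (forall phi : {mpoly K[3]} -> {mpoly K[3]},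
     is_gr_PAut phi <->
     exists eps a b c d e f : K,
       b * f != c * e /\ eps ^+ 2 = b * f - c * e /\
       phi =1 lin_subst (mx3 eps 0 0 a b c d e f)) /\
  (forall phi : {mpoly K[3]} -> {mpoly K[3]},
     is_PReflection phi <->
     exists a d : K, phi =1 lin_subst (mx3 (-1) 0 0 a 1 0 d 0 1)).
Proof.
split => phi; split.
- exact: (@gr_fwd K hK phi).
- move=> [eps [a [b [c [d [e [f [h1 [h2 h3]]]]]]]]].
  exact: (@gr_bwd K phi eps a b c d e f h1 h2 h3).
- exact: (@refl_fwd K hK phi).
- move=> [a [d h]]; exact: (@refl_bwd K hK phi a d h).
Qed.
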